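(* Let $(X,d)$ be a compact metric space and let $f_1,f_2:X\to X$ be continuous. Suppose there is $c\in X$ with $f_1(x)=c$ for all $x\in X$, $f_2(c)=c$, and $f_2$ is Kato chaotic. Then the multiple mapping $F=\{f_1,f_2\}$ is (Hausdorff metric) Kato chaotic.
   Context: A continuous $f:X\to X$ is sensitive if there is $\delta>0$ such that for every nonempty open $U\subset X$ there exist $x,y\in U$, $n\in\mathbb{Z}^+$ with $d(f^n(x),f^n(y))>\delta$; accessible if for every $\epsilon>0$ and all nonempty open $U,V\subset X$ there exist $x\in U,y\in V,n\in\mathbb{Z}^+$ with $d(f^n(x),f^n(y))<\epsilon$; Kato chaotic if sensitive and accessible. For $F=\{f_1,f_2\}$ and $n\ge1$, $F^n(x)=\{f_{i_1}\cdots f_{i_n}(x)\mid i_1,\dots,i_n\in\{1,2\}\}$, and $d_H(A,B)=\max\{\sup_{a\in A}\inf_{b\in B}d(a,b),\sup_{b\in B}\inf_{a\in A}d(a,b)\}$ is the Hausdorff metric. $F$ is (Hausdorff metric) sensitive, resp. accessible, if the same definitions hold with $d(f^n(x),f^n(y))$ replaced by $d_H(F^n(x),F^n(y))$; $F$ is (Hausdorff metric) Kato chaotic if it is both. Here $\mathbb{Z}^+=\{1,2,\dots\}$. *)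

(* Defs.v *)
From HB Require Import structures.
From mathcomp Require Import all_boot all_order all_algebra.
From mathcomp Require Import all_classical all_reals all_analysis.
Set Implicit Arguments. Unset Strict Implicit. Unset Printing Implicit Defensive.
Import Order.TTheory GRing.Theory Num.Theory.
Local Open Scope classical_set_scope.
Local Open Scope ring_scope.

Section KatoDefs.
Context {R : realType} {X : metricType R}.

Definition dist (x y : X) : R := mdist x y.

Definition sensitive (f : X -> X) : Prop :=
  exists delta : R, 0 < delta /\
    forall U : set X, open U -> U !=set0 ->
      exists x y : X, exists n : nat,
        [/\ U x, U y, (0 < n)%N & delta < dist (iter n f x) (iter n f y)].

Definition accessible (f : X -> X) : Prop :=
  forall eps : R, 0 < eps ->
    forall U V : set X, open U -> U !=set0 -> open V -> V !=set0 ->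
      exists x y : X, exists n : nat,
        [/\ U x, V y, (0 < n)%N & dist (iter n f x) (iter n f y) < eps].

Definition kato_chaotic (f : X -> X) : Prop := sensitive f /\ accessible f.

(* F^n(x) for F = {f1, f2}: all f_{i1} o ... o f_{in} (x); a word
   w = [:: i1; ...; in] (false = index 1, true = index 2) is applied by foldr,
   so i_n acts first. *)
Definition apply_word (f1 f2 : X -> X) (w : seq bool) (x : X) : X :=
  foldr (fun (i : bool) (y : X) => if i then f2 y else f1 y) x w.

Definition Fiter (f1 f2 : X -> X) (n : nat) (x : X) : set X :=
  [set apply_word f1 f2 w x | w in [set w : seq bool | size w = n]].

Definition hausdorff_dist (A B : set X) : R :=
  Num.max (sup [set inf [set dist a b | b in B] | a in A])
          (sup [set inf [set dist a b | a in A] | b in B]).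

Definition HD (f1 f2 : X -> X) (n : nat) (x y : X) : R :=
  hausdorff_dist (Fiter f1 f2 n x) (Fiter f1 f2 n y).

Definition H_sensitive (f1 f2 : X -> X) : Prop :=
  exists delta : R, 0 < delta /\
    forall U : set X, open U -> U !=set0 ->
      exists x y : X, exists n : nat,
        [/\ U x, U y, (0 < n)%N & delta < HD f1 f2 n x y].

Definition H_accessible (f1 f2 : X -> X) : Prop :=
  forall eps : R, 0 < eps ->
    forall U V : set X, open U -> U !=set0 -> open V -> V !=set0 ->
      exists x y : X, exists n : nat,
        [/\ U x, V y, (0 < n)%N & HD f1 f2 n x y < eps].

Definition H_kato_chaotic (f1 f2 : X -> X) : Prop :=
  H_sensitive f1 f2 /\ H_accessible f1 f2.

End KatoDefs.

(* Main.v *)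
Require Import Defs.
From HB Require Import structures.
From mathcomp Require Import all_boot all_order all_algebra.
From mathcomp Require Import all_classical all_reals all_analysis.
Local Open Scope classical_set_scope.
Local Open Scope ring_scope.
From mathcomp Require Import lra.
Import Order.TTheory GRing.Theory Num.Theory.

Section Aux.
Context {R : realType} {X : metricType R}.

Lemma d_ge0 (x y : X) : 0 <= dist x y.
Proof. exact: mdist_ge0. Qed.
Lemma d_xx (x : X) : dist x x = 0.
Proof. exact: mdistxx. Qed.
Lemma d_sym (x y : X) : dist x y = dist y x.
Proof. exact: metric_sym. Qed.
Lemma d_tri (x y z : X) : dist x z <= dist x y + dist y z.
Proof. exact: metric_triangle. Qed.

Lemma infd_le (B : set X) p q : B q -> inf [set dist p q' | q' in B] <= dist p q.
Proof.
move=> Bq; apply: ge_inf; last by exists q.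
by exists 0 => _ [q' _ <-]; exact: d_ge0.
Qed.

Lemma le_infd (B : set X) p m : B !=set0 -> (forall q, B q -> m <= dist p q) ->
  m <= inf [set dist p q' | q' in B].
Proof.
move=> [q Bq] H; apply: lb_le_inf; first by exists (dist p q), q.
by move=> _ [q' Bq' <-]; exact: H.
Qed.

Lemma infd_le2 (B : set X) p q : B q -> inf [set dist q' p | q' in B] <= dist q p.
Proof.
move=> Bq; apply: ge_inf; last by exists q.
by exists 0 => _ [q' _ <-]; exact: d_ge0.
Qed.

Lemma le_infd2 (B : set X) p m : B !=set0 -> (forall q, B q -> m <= dist q p) ->
  m <= inf [set dist q' p | q' in B].
Proof.
move=> [q Bq] H; apply: lb_le_inf; first by exists (dist q p), q.
by move=> _ [q' Bq' <-]; exact: H.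
Qed.

Lemma sup_le (A : set X) (g : X -> R) M : A !=set0 -> (forall p, A p -> g p <= M) ->
  sup [set g p | p in A] <= M.
Proof.
move=> [p Ap] H; apply: ge_sup; first by exists (g p), p.
by move=> _ [q Aq <-]; exact: H.
Qed.

Lemma le_sup (A : set X) (g : X -> R) M p : (forall p, A p -> g p <= M) -> A p ->
  g p <= sup [set g p | p in A].
Proof.
move=> H Ap; apply: ub_le_sup; last by exists p.
by exists M => _ [q Aq <-]; exact: H.
Qed.

Lemma Fiter_char (f1 f2 : X -> X) c n x :
  (forall x, f1 x = c) -> f2 c = c -> (0 < n)%N ->
  forall p, Fiter f1 f2 n x p <-> (p = c \/ p = iter n f2 x).
Proof.
move=> hf1 hf2 n0 p; split.
  case=> w /= <- {p} <-.
  elim: w => [|[] w IH] /=; first by right.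
    by case: IH => ->; [left | right].
  by left.
have Hn : forall m, apply_word f1 f2 (nseq m true) x = iter m f2 x.
  by elim=> //= m ->.
case=> ->.
  exists (false :: nseq n.-1 true) => //=.
  by rewrite size_nseq prednK.
by exists (nseq n true); rewrite /= ?size_nseq.
Qed.

Lemma HD_le (A B : set X) c a b :
  (forall p, A p <-> (p = c \/ p = a)) -> (forall p, B p <-> (p = c \/ p = b)) ->
  hausdorff_dist A B <= dist a b.
Proof.
move=> hA hB; rewrite /hausdorff_dist ge_max; apply/andP; split.
  apply: sup_le; first by exists c; apply/hA; left.
  move=> p /hA [->|->].
    have Bc : B c by apply/hB; left.
    apply: le_trans (@infd_le B c c Bc) _.
    by rewrite d_xx d_ge0.
  by apply: infd_le; apply/hB; right.
apply: sup_le; first by exists c; apply/hB; left.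
move=> p /hB [->|->].
  have Ac : A c by apply/hA; left.
  apply: le_trans (@infd_le2 A c c Ac) _.
  by rewrite d_xx d_ge0.
by apply: infd_le2; apply/hA; right.
Qed.

Lemma HD_ge (A B : set X) c a b (m : R) :
  (forall p, A p <-> (p = c \/ p = a)) -> (forall p, B p <-> (p = c \/ p = b)) ->
  m < dist a b -> m / 2 <= hausdorff_dist A B.
Proof.
move=> hA hB hm; have dab := d_ge0 a b.
have tri : dist a b <= dist a c + dist b c by rewrite (d_sym b c); exact: d_tri.
have [hac|hbc] : m / 2 <= dist a c \/ m / 2 <= dist b c.
  case: (lerP (m / 2) (dist a c)) => h; [by left|right].
  lra.
- rewrite /hausdorff_dist le_max; apply/orP; left.
  have Aa : A a by apply/hA; right.
  apply: le_trans (@le_sup A _ (dist a c) a _ Aa).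
    apply: le_infd; first by exists c; apply/hB; left.
    move=> q /hB [->|->] //; lra.
  move=> p /hA [->|->]; last by apply: infd_le; apply/hB; left.
  have Bc : B c by apply/hB; left.
    apply: le_trans (@infd_le B c c Bc) _.
  by rewrite d_xx d_ge0.
- rewrite /hausdorff_dist le_max; apply/orP; right.
  have Bb : B b by apply/hB; right.
  apply: le_trans (@le_sup B _ (dist b c) b _ Bb).
    apply: le_infd2; first by exists c; apply/hA; left.
    move=> q /hA [->|->]; [by rewrite d_sym | lra].
  move=> p /hB [->|->]; last by rewrite d_sym; apply: infd_le2; apply/hA; left.
  have Ac : A c by apply/hA; left.
  apply: le_trans (@infd_le2 A c c Ac) _.
  by rewrite d_xx d_ge0.
Qed.

End Aux.

Theorem corollary3p12 (R : realType) (X : metricType R) (f1 f2 : X -> X) (c : X) :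
  compact [set: X] ->
  continuous f1 -> continuous f2 ->
  (forall x : X, f1 x = c) ->
  f2 c = c ->
  kato_chaotic f2 ->
  H_kato_chaotic f1 f2.
Proof.
move=> _ _ _ hf1 hf2 [[d [d0 hs]] ha]; split.
  exists (d / 4); split; first lra.
  move=> U oU nU; have [x [y [n [Ux Uy n0 hd]]]] := hs U oU nU.
  exists x, y, n; split => //.
  have := @HD_ge _ _ _ _ _ _ _ _ (@Fiter_char _ _ f1 f2 c n x hf1 hf2 n0) (@Fiter_char _ _ f1 f2 c n y hf1 hf2 n0) hd.
  rewrite /HD => h; apply: lt_le_trans h; lra.
move=> e e0 U V oU nU oV nV; have [x [y [n [Ux Vy n0 hd]]]] := ha e e0 U V oU nU oV nV.
exists x, y, n; split => //.
apply: le_lt_trans hd.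
apply: (@HD_le _ _ _ _ _ _ _ (@Fiter_char _ _ f1 f2 c n x hf1 hf2 n0) (@Fiter_char _ _ f1 f2 c n y hf1 hf2 n0)).
Qed.
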